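(* Let $n,m$ be positive integers and $\mathbf a'=(a_1,\dots,a_{n+1})$, $\mathbf b'=(b_1,\dots,b_{n+1})\in\mathbb Z^{n+1}$ with $\sum_ia_i=\sum_ib_i$. Then $\mathcal F_{H(n,m)}(\mathbf a',\mathbf b')$ is integrally equivalent to $\mathcal F_{H(n,m)}(\mathrm{rev}(\mathbf b'),\mathrm{rev}(\mathbf a'))$, where $\mathrm{rev}(v_1,\dots,v_{n+1})=(v_{n+1},\dots,v_1)$.
   Context: $H(n,m)$ is the directed $(n+1)\times(m+1)$ grid graph with vertex set $\{(i,j):1\le i\le n+1,\ 0\le j\le m\}$ and edges $((i,j),(i,j+1))$ for $1\le i\le n+1$, $0\le j\le m-1$, and $((i,j),(i+1,j))$ for $1\le i\le n$, $0\le j\le m$. $\mathcal F_{H(n,m)}(\mathbf a',\mathbf b')$ is the set of nonnegative real edge weightings such that at each vertex, outflow minus inflow equals its netflow, where $(i,0)$ has netflow $a_i$, $(i,m)$ has netflow $-b_i$ ($1\le i\le n+1$), and all other vertices have netflow $0$. Two polytopes are integrally equivalent if there is an affine map restricting to a bijection between them that preserves the lattice (a bijection between the integer points of their affine spans). *)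

(* Defs.v *)
From HB Require Import structures.
From mathcomp Require Import all_boot all_order all_algebra.
From mathcomp Require Import reals.
Set Implicit Arguments. Unset Strict Implicit. Unset Printing Implicit Defensive.
Import Order.TTheory GRing.Theory Num.Theory.
Local Open Scope ring_scope.

(* Vertices of H(n,m): (i,j) with i : 'I_n.+1 (paper's row i+1) and
   j : 'I_m.+1 (paper's column j). *)
Definition Hvert (n m : nat) : finType := ('I_n.+1 * 'I_m.+1)%type.

(* Edges: inl (i,j) is the horizontal edge (i,j) -> (i,j+1), j < m;
          inr (i,j) is the vertical edge (i,j) -> (i+1,j), i < n. *)
Definition Hedge (n m : nat) : finType :=
  (('I_n.+1 * 'I_m) + ('I_n * 'I_m.+1))%type.

Definition Hsrc (n m : nat) (e : Hedge n m) : Hvert n m :=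
  match e with
  | inl (i, j) => (i, widen_ord (leqnSn m) j)
  | inr (i, j) => (widen_ord (leqnSn n) i, j)
  end.

Definition Htgt (n m : nat) (e : Hedge n m) : Hvert n m :=
  match e with
  | inl (i, j) => (i, lift ord0 j)
  | inr (i, j) => (lift ord0 i, j)
  end.

Definition Hnetflow (R : nzRingType) (n m : nat) (a b : 'I_n.+1 -> int)
    (v : Hvert n m) : R :=
  (if v.2 == ord0 then (a v.1)%:~R else 0)
  - (if v.2 == ord_max then (b v.1)%:~R else 0).

Definition flow_polytope (R : realType) (n m : nat) (a b : 'I_n.+1 -> int)
    (x : Hedge n m -> R) : Prop :=
  (forall e, 0 <= x e) /\
  (forall v : Hvert n m,
      \sum_(e | Hsrc e == v) x e - \sum_(e | Htgt e == v) x e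
      = Hnetflow R a b v).

Definition rev_vec (n : nat) (a : 'I_n.+1 -> int) : 'I_n.+1 -> int :=
  fun i => a (rev_ord i).

Definition affine_map (R : nzRingType) (E E' : finType)
    (f : (E -> R) -> (E' -> R)) : Prop :=
  exists (A : E' -> E -> R) (c : E' -> R),
    forall x e', f x e' = c e' + \sum_(e : E) A e' e * x e.

Definition aff_span (R : nzRingType) (E : finType) (P : (E -> R) -> Prop)
    (x : E -> R) : Prop :=
  exists (k : nat) (lam : 'I_k -> R) (p : 'I_k -> E -> R),
    (forall i, P (p i)) /\ \sum_(i < k) lam i = 1 /\
    (forall e, x e = \sum_(i < k) lam i * p i e).

Definition integral_point (R : nzRingType) (E : finType) (x : E -> R) : Prop :=
  forall e, exists z : int, x e = z%:~R.

Definition bij_between (A B : Type) (f : A -> B) (S : A -> Prop)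
    (T : B -> Prop) : Prop :=
  (forall x, S x -> T (f x)) /\
  (forall x y, S x -> S y -> f x = f y -> x = y) /\
  (forall y, T y -> exists2 x, S x & f x = y).

Definition integrally_equivalent (R : nzRingType) (E E' : finType)
    (P : (E -> R) -> Prop) (Q : (E' -> R) -> Prop) : Prop :=
  exists f : (E -> R) -> (E' -> R),
    affine_map f /\ bij_between f P Q /\
    bij_between f (fun x => aff_span P x /\ integral_point x)
                  (fun y => aff_span Q y /\ integral_point y).

(* Main.v *)
Require Import Defs.
From HB Require Import structures.
From mathcomp Require Import all_boot all_order all_algebra.
From mathcomp Require Import reals.
From mathcomp Require Import zify ring.
From Stdlib Require Import FunctionalExtensionality.
Import Order.TTheory GRing.Theory Num.Theory.
Local Open Scope ring_scope.

Section S.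
Variables (n m : nat).

Definition sig (e : Hedge n m) : Hedge n m :=
  match e with
  | inl (i, j) => inl (rev_ord i, rev_ord j)
  | inr (i, j) => inr (rev_ord i, rev_ord j)
  end.

Lemma sigK : involutive sig.
Proof. by case=> [[i j]|[i j]] /=; rewrite !rev_ordK. Qed.

Lemma sig_inj : injective sig.
Proof. exact: inv_inj sigK. Qed.

Definition vrev (v : Hvert n m) : Hvert n m := (rev_ord v.1, rev_ord v.2).

Lemma vrevK : involutive vrev.
Proof. by case=> i j; rewrite /vrev /= !rev_ordK. Qed.

Lemma src_sig e : Hsrc (sig e) = vrev (Htgt e).
Proof.
case: e => [[i j]|[i j]] /=; rewrite /vrev /=; congr pair; apply/val_inj => /=;
  rewrite /bump /=; move: (ltn_ord i) (ltn_ord j); lia.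
Qed.

Lemma tgt_sig e : Htgt (sig e) = vrev (Hsrc e).
Proof.
case: e => [[i j]|[i j]] /=; rewrite /vrev /=; congr pair; apply/val_inj => /=;
  rewrite /bump /=; move: (ltn_ord i) (ltn_ord j); lia.
Qed.

Definition fmap {R : nzRingType} (x : Hedge n m -> R) : Hedge n m -> R :=
  fun e => x (sig e).

Lemma fmapK {R : nzRingType} (x : Hedge n m -> R) : fmap (fmap x) = x.
Proof. apply: functional_extensionality => e; by rewrite /fmap sigK. Qed.

Lemma map_poly_flow (R : realType) (a b a' b' : 'I_n.+1 -> int) x :
  (forall i, a' i = b (rev_ord i)) -> (forall i, b' i = a (rev_ord i)) ->
  @flow_polytope R n m a b x -> @flow_polytope R n m a' b' (fmap x).
Proof.
move=> ha hb [x0 hx]; split => [e|v]; first exact: x0.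
have E : forall w, (vrev w == v) = (w == vrev v).
  by move=> w; apply/eqP/eqP => [<-|->]; rewrite vrevK.
have r1 : \sum_(e | Hsrc e == v) x (sig e) = \sum_(e | Htgt e == vrev v) x e.
  rewrite (reindex_inj sig_inj) /=; apply: eq_big => e; first by rewrite src_sig E.
  by rewrite sigK.
have r2 : \sum_(e | Htgt e == v) x (sig e) = \sum_(e | Hsrc e == vrev v) x e.
  rewrite (reindex_inj sig_inj) /=; apply: eq_big => e; first by rewrite tgt_sig E.
  by rewrite sigK.
rewrite /fmap r1 r2 -opprB; clear E r1 r2.
have := hx (vrev v); rewrite /Hnetflow => ->.
case: v => i j /=; rewrite ha hb.
have e0 : (rev_ord j == ord0) = (j == ord_max).
  by apply/eqP/eqP => [/(f_equal val) /= h|->]; apply/val_inj => /=; move: (ltn_ord j); lia.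
have e1 : (rev_ord j == ord_max) = (j == ord0).
  by apply/eqP/eqP => [/(f_equal val) /= h|->]; apply/val_inj => /=; move: (ltn_ord j); lia.
rewrite e0 e1; ring.
Qed.

End S.
Arguments fmap {n m R}.
Arguments fmapK {n m R}.
Arguments sig {n m}.

Theorem proposition7p4 (R : realType) (n m : nat) (a b : 'I_n.+1 -> int) :
  (0 < n)%N -> (0 < m)%N ->
  \sum_(i < n.+1) a i = \sum_(i < n.+1) b i ->
  integrally_equivalent (@flow_polytope R n m a b)
                        (@flow_polytope R n m (rev_vec b) (rev_vec a)).
Proof.
move=> _ _ _.
have PQ : forall x, @flow_polytope R n m a b x ->
    @flow_polytope R n m (rev_vec b) (rev_vec a) (fmap x).
  by move=> x; apply: map_poly_flow.
have QP : forall x, @flow_polytope R n m (rev_vec b) (rev_vec a) x ->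
    @flow_polytope R n m a b (fmap x).
  by move=> x; apply: map_poly_flow => i; rewrite /rev_vec rev_ordK.
have finj : forall x y : Hedge n m -> R, fmap x = fmap y -> x = y.
  by move=> x y h; rewrite -(fmapK x) h fmapK.
have spanPQ : forall (P Q : (Hedge n m -> R) -> Prop),
    (forall x, P x -> Q (fmap x)) ->
    forall x, aff_span P x /\ integral_point x ->
      aff_span Q (fmap x) /\ integral_point (fmap x).
  move=> P Q hPQ x [[k [lam [p [hp [h1 he]]]]] hi]; split; last first.
    by move=> e; apply: hi.
  exists k, lam, (fun i => fmap (p i)); split; first by move=> i; apply: hPQ.
  by split=> // e; rewrite /fmap he.
exists (@fmap n m R); split.
  exists (fun e' e => if e == sig e' then 1 else 0), (fun _ => 0) => x e'.
  rewrite add0r (bigD1 (sig e')) //= eqxx mul1r big1 ?addr0 //.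
  by move=> e /negbTE ->; rewrite mul0r.
split.
  split; first exact: PQ.
  split; first by move=> x y _ _; apply: finj.
  by move=> y hy; exists (fmap y); [apply: QP | rewrite fmapK].
split; first exact: spanPQ.
split; first by move=> x y _ _; apply: finj.
by move=> y hy; exists (fmap y); [apply: spanPQ hy | rewrite fmapK].
Qed.
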